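(* Let $\mathcal{G}=(\mathcal{V},\mathcal{E})$ be a graph with $V=|\mathcal{V}|$ vertices and $E=|\mathcal{E}|$ edges, and let $\epsilon>0$ and $\gamma\in(0,1)$. Consider the algorithm which, on input $w:\mathcal{E}\to\mathbb{R}^+$, samples independently for each edge $e$ a random variable $X_e\sim\mathrm{Lap}(1/\epsilon)$, sets $w'(e)=w(e)+X_e+(1/\epsilon)\ln(E/\gamma)$, and for each pair of vertices $x,y$ releases a minimum-weight path from $x$ to $y$ in $(\mathcal{G},w')$. With probability at least $1-\gamma$, for every pair of vertices $s,t$ (joined by some path) the released path $P$ satisfies $w(P)-d_w(s,t)\le(2V/\epsilon)\ln(E/\gamma)$.
   Context: $\mathrm{Lap}(b)$ is the Laplace distribution with density $\frac{1}{2b}e^{-|x|/b}$. The weight $w(P)$ of a path is the sum of the weights of its edges, and $d_w(s,t)$ is the minimum weight of a path from $s$ to $t$; $w(P)-d_w(s,t)$ is the approximation error of the path. *)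

(* Defs.v *)
From HB Require Import structures.
From mathcomp Require Import all_boot all_order all_algebra.
From mathcomp Require Import all_classical all_reals all_analysis.
Set Implicit Arguments. Unset Strict Implicit. Unset Printing Implicit Defensive.
Import Order.TTheory GRing.Theory Num.Theory.
Import numFieldNormedType.Exports.
Local Open Scope classical_set_scope.
Local Open Scope ring_scope.

Definition simple_graph (V E : finType) (src dst : E -> V) : Prop :=
  (forall e, src e != dst e) /\
  (forall e f, (src e == src f) && (dst e == dst f)
             || (src e == dst f) && (dst e == src f) -> e = f).

Definition joins (V E : finType) (src dst : E -> V) (e : E) (x y : V) : bool :=
  (src e == x) && (dst e == y) || (src e == y) && (dst e == x).

Fixpoint walk_ok (V E : finType) (src dst : E -> V) (es : seq E) (vs : seq V)
  : bool :=
  match es, vs with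
  | [::], [:: _] => true
  | e :: es', x :: ((y :: _) as vs') => joins src dst e x y && walk_ok src dst es' vs'
  | _, _ => false
  end.

Definition is_path (V E : finType) (src dst : E -> V) (s t : V) (p : seq E)
  : Prop :=
  exists vs : seq V,
    [/\ head s vs = s, last s vs = t, uniq vs & walk_ok src dst p vs].

Definition pweight (E : finType) (R : numDomainType) (w : E -> R) (p : seq E) : R :=
  \sum_(e <- p) w e.

Definition laplace_pdf (R : realType) (b : R) (x : R) : R :=
  (2 * b)^-1 * expR (- `|x| / b).

Definition is_laplace d (T : measurableType d) (R : realType)
    (P : probability T R) (b : R) (X : {RV P >-> R}) : Prop :=
  forall A : set R, measurable A ->
    P (X @^-1` A) = (\int[lebesgue_measure]_(x in A) (laplace_pdf b x)%:E)%E.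

Definition mutually_independent d (T : measurableType d) (R : realType)
    (P : probability T R) (I : finType) (X : I -> {RV P >-> R}) : Prop :=
  forall (S : {set I}) (B : I -> set R), (forall i, measurable (B i)) ->
    P [set om | forall i, i \in S -> B i (X i om)]
    = (\prod_(i in S) P (X i @^-1` B i))%E.

(* Main.v *)
Require Import Defs.
From HB Require Import structures.
From mathcomp Require Import all_boot all_order all_algebra.
From mathcomp Require Import all_classical all_reals all_analysis.
From mathcomp Require Import ring lra measurable_realfun.
Import Order.TTheory GRing.Theory Num.Theory.
Import numFieldNormedType.Exports.
Local Open Scope classical_set_scope.
Local Open Scope ring_scope.

Lemma dexp (R : realType) (c k x : R) : k != 0 ->
  is_derive x 1 (fun y : R => c / k * expR (k * y)) (c * expR (k * x)).
Proof.
move=> k0.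
apply: is_derive_eq.
rewrite /GRing.scale /= mulr1 mulrCA -!mulrA mulVf // mulr1 mulrC //.
Qed.

Lemma cexp (R : realType) (c k : R) : continuous (fun y : R => c * expR (k * y)).
Proof.
move=> z; apply: cvgM; first exact: cvg_cst.
apply: continuous_comp; last exact: continuous_expR.
by apply: cvgM; [exact: cvg_cst | exact: cvg_id].
Qed.

Lemma int_exp (R : realType) (c k a b : R) : k != 0 -> a < b ->
  (\int[lebesgue_measure]_(x in `[a, b]) (c * expR (k * x))%:E
   = (c / k * expR (k * b))%:E - (c / k * expR (k * a))%:E)%E.
Proof.
move=> k0 ab.
apply: (@continuous_FTC2 _ _ (fun y : R => c / k * expR (k * y))) => //.
- by apply: continuous_subspaceT; exact: cexp.
- split.
  + by move=> z _; apply: ex_derive; exact: dexp.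
  + by apply/cvg_at_right_filter; exact: cexp.
  + by apply/cvg_at_left_filter; exact: cexp.
- move=> z _; rewrite derive1E; apply: derive_val; exact: dexp.
Qed.

Lemma meas_lap (R : realType) (b : R) (D : set R) :
  measurable_fun D (EFin \o laplace_pdf b).
Proof.
apply/measurable_EFinP; apply: measurable_funTS; apply: continuous_measurable_fun.
move=> x; apply: cvgM; first exact: cvg_cst.
apply: continuous_comp; last exact: continuous_expR.
apply: cvgM; last exact: cvg_cst.
apply: cvgN; exact: norm_continuous.
Qed.

Lemma lap_mass (R : realType) (e s : R) : 0 < e -> 0 < s ->
  (\int[lebesgue_measure]_(x in `[(-s)%R, s]) (laplace_pdf e^-1 x)%:E
   = (1 - expR (- (e * s)))%:E)%E.
Proof.
move=> e0 s0.
rewrite (@itv_bndbnd_setU _ _ (BLeft (-s)) (BLeft 0) (BRight s)); last 2 first.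
- by rewrite bnd_simp; lra.
- by rewrite bnd_simp; lra.
rewrite ge0_integral_setU //=; last 3 first.
- exact: meas_lap.
- move=> x _; rewrite lee_fin /laplace_pdf mulr_ge0 ?expR_ge0 // invr_ge0 mulr_ge0 // invr_ge0; lra.
- rewrite disj_set2E; apply/eqP; apply/seteqP; split => x //=.
  by rewrite !in_itv /= => -[/andP[_ ?] /andP[? _]]; lra.
rewrite integral_itv_bndo_bndc; last exact: meas_lap.
rewrite [X in (X + _)%E](_ : _ = \int[lebesgue_measure]_(x in `[(-s)%R, 0%R]) (e / 2 * expR (e * x))%:E)%E; last first.
  apply: eq_integral => x; rewrite inE /= in_itv /= => /andP[_ x0].
  by rewrite /laplace_pdf ler0_norm // invfM invrK opprK (mulrC x) (mulrC 2^-1).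
rewrite [X in (_ + X)%E](_ : _ = \int[lebesgue_measure]_(x in `[0%R, s]) (e / 2 * expR (- e * x))%:E)%E; last first.
  apply: eq_integral => x; rewrite inE /= in_itv /= => /andP[x0 _].
  by rewrite /laplace_pdf ger0_norm // invfM invrK mulNr (mulrC x) (mulrC 2^-1) mulNr.
rewrite int_exp; [|by rewrite gt_eqF|lra].
rewrite int_exp; [|by rewrite oppr_eq0 gt_eqF|lra].
rewrite -!EFinB -EFinD; congr EFin.
rewrite !mulr0 expR0 mulNr.
have e0' : e != 0 by rewrite gt_eqF.
rewrite mulrN; set t := expR _; by field.
Qed.

Lemma bernoulli (R : realFieldType) (x : R) n : 0 <= x <= 1 ->
  1 - n%:R * x <= (1 - x) ^+ n.
Proof.
move=> /andP[x0 x1]; elim: n => [|n IH]; first by rewrite expr0 mul0r subr0.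
rewrite exprS -natr1.
have h : 0 <= 1 - x by lra.
have IH2 : 0 <= (1 - x) ^+ n - (1 - n%:R * x) by rewrite subr_ge0.
have := mulr_ge0 h IH2.
have := mulr_ge0 (ler0n R n) (mulr_ge0 x0 x0).
set y := (1 - x) ^+ n; nra.
Qed.

Lemma walk_size (V E : finType) (src dst : E -> V) es vs :
  walk_ok src dst es vs -> size vs = (size es).+1.
Proof.
elim: es vs => [|e es IH] [|x [|y vs]] //= /andP[_ H].
by move: (IH _ H) => /= ->.
Qed.

Lemma path_size (V E : finType) (src dst : E -> V) s t q :
  is_path src dst s t q -> (size q < #|V|)%N.
Proof.
case=> vs [_ _ Hu Hw].
by rewrite -(@walk_size _ _ _ _ _ _ Hw) -(card_uniqP Hu); exact: max_card.
Qed.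

Lemma pw_up (E : finType) (R : realDomainType) (a b : E -> R) c q :
  (forall e, a e <= b e + c) -> pweight a q <= pweight b q + (size q)%:R * c.
Proof.
move=> H; elim: q => [|e q IH]; first by rewrite /pweight !big_nil mul0r addr0.
rewrite /pweight !big_cons /= -natr1 -/(pweight a q) -/(pweight b q).
have := H e; lra.
Qed.

Lemma pw_lo (E : finType) (R : realDomainType) (a b : E -> R) q :
  (forall e, a e <= b e) -> pweight a q <= pweight b q.
Proof. by move=> H; rewrite /pweight; apply: ler_sum. Qed.

Theorem corollary5p6
  (V E : finType) (src dst : E -> V) (Hgraph : simple_graph src dst)
  (R : realType) (eps gamma : R) (Heps : 0 < eps)
  (Hgamma : 0 < gamma < 1)
  (w : E -> R) (Hw : forall e, 0 < w e)
  (d : measure_display) (T : measurableType d) (P : probability T R)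
  (X : E -> {RV P >-> R})
  (Hind : mutually_independent X)
  (Hlap : forall e, is_laplace eps^-1 (X e)) :
  let shift := eps^-1 * ln (#|E|%:R / gamma) in
  let w' := fun (om : T) (e : E) => w e + X e om + shift in
  exists A : set T,
    [/\ measurable A, (P A >= (1 - gamma)%:E)%E &
        forall om, A om ->
        forall (s t : V) (p : seq E),
          is_path src dst s t p ->
          (forall q, is_path src dst s t q ->
             pweight (w' om) p <= pweight (w' om) q) ->
          forall q, is_path src dst s t q ->
            pweight w p - pweight w q
              <= 2 * #|V|%:R / eps * ln (#|E|%:R / gamma)].
Proof.
move=> shift w'.
case/andP: Hgamma => g0 g1.
have e0 : eps != 0 by rewrite gt_eqF.
set n := #|E|.
set L := ln (n%:R / gamma).
have L0 : 0 <= L.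
  have [n0|n0] := posnP n; first by rewrite /L n0 mul0r ln0.
  apply/ltW/ln_gt0; rewrite ltr_pdivlMr // mul1r.
  by apply: (lt_le_trans g1); rewrite ler1n.
have s0 : 0 <= shift by rewrite /shift mulr_ge0 // invr_ge0 ltW.
pose B := fun (_ : E) => `[(- shift)%R, shift]%classic.
exists [set om | forall i, i \in ([set: E]%SET : {set E}) -> B i (X i om)].
split.
- rewrite (_ : [set om | _] = \bigcap_(i in [set: E]) (X i @^-1` B i)).
    apply: fin_bigcap_measurable; first exact: finite_finset.
    by move=> i _; apply: measurable_funPTI; exact: measurable_itv.
  apply/seteqP; split => om /=.
    by move=> H i _; apply: H; rewrite inE.
  by move=> H i _; apply: H.
- rewrite Hind; last by move=> i; exact: measurable_itv.
  have [n0|n0] := posnP n.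
    rewrite big_pred0; first by rewrite lee_fin; lra.
    by move=> i; move: (card0_eq n0 i); rewrite !inE.
  have Lp : 0 < L.
    apply/ln_gt0; rewrite ltr_pdivlMr // mul1r.
    by apply: (lt_le_trans g1); rewrite ler1n.
  have sp : 0 < shift by rewrite /shift mulr_gt0 // invr_gt0.
  rewrite (eq_bigr (fun _ => (1 - gamma / n%:R)%:E)); last first.
    move=> i _; rewrite Hlap; last exact: measurable_itv.
    rewrite /B lap_mass //; congr (_ - _)%:E.
    rewrite /shift mulrA mulfV // mul1r /L expRN lnK ?invf_div //.
    by rewrite posrE divr_gt0 // ltr0n.
  rewrite prodEFin prodr_const cardsT -/n lee_fin.
  have nn : (n%:R : R) != 0 by rewrite pnatr_eq0 -lt0n.
  have := @bernoulli R (gamma / n%:R) n.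
  rewrite mulrCA mulfV // mulr1; apply.
  apply/andP; split; first by exact: divr_ge0 (ltW g0) (ler0n _ _).
  rewrite ler_pdivrMr ?ltr0n // mul1r.
  by apply: (le_trans (ltW g1)); rewrite ler1n.
- move=> om Hom s t p Hp Hmin q Hq.
  have Hb : forall e, - shift <= X e om <= shift.
    move=> e; have := Hom e (finset.in_setT e); rewrite /B /= in_itv /=; by [].
  have h1 : pweight w p <= pweight (w' om) p.
    apply: pw_lo => e; rewrite /w'; have := Hb e; lra.
  have h2 : pweight (w' om) q <= pweight w q + (size q)%:R * (2 * shift).
    apply: pw_up => e; rewrite /w'; have := Hb e; lra.
  have h3 := Hmin q Hq.
  have h4 : (size q)%:R * (2 * shift) <= #|V|%:R * (2 * shift).
    apply: ler_wpM2r; first by rewrite mulr_ge0.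
    by rewrite ler_nat ltnW // (@path_size _ _ _ _ _ _ _ Hq).
  have -> : 2 * #|V|%:R / eps * L = #|V|%:R * (2 * shift).
    by rewrite /shift -/L; field.
  lra.
Qed.
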